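(* $SL_3(\mathfrak{o})$ is the disjoint union $\Delta_2\sqcup\Delta_{1,0}\sqcup\Delta_{1,1}$, where $$\Delta_2=\bigsqcup_{y\in Y(\mathfrak{o})}\bigsqcup_{d\in D(3)}\bigsqcup_{u\in U(3)}\varphi_2(y^{-1})du\Gamma_\infty(3),\quad \Delta_{1,0}=\bigsqcup_{\substack{y_1,y_2\in Y(\mathfrak{o})\\ y_2\neq I_2}}\bigsqcup_{d\in D(3)}\bigsqcup_{u\in U(3)}\varphi_2(y_1^{-1})\varphi_1(y_2^{-1})du\Gamma_\infty(3),$$ $$\Delta_{1,1}=\bigsqcup_{\substack{y_1,y_2,y_3\in Y(\mathfrak{o})\\ y_2,y_3\neq I_2}}\bigsqcup_{d\in D(3)}\bigsqcup_{u\in U(3)}\varphi_2(y_1^{-1})\varphi_1(y_2^{-1})\varphi_2(y_3^{-1})du\Gamma_\infty(3).$$ In particular, all the sets appearing on the right-hand sides are pairwise disjoint and their union is $SL_3(\mathfrak{o})$.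
   Context: Let $\omega=e^{2\pi i/3}$, $\mathfrak{o}=\mathbb{Z}[\omega]$, $\mathfrak{o}^\times$ its unit group. Fix representatives of nonzero elements modulo units (''$c\in(\mathfrak{o}-\{0\})/\mathfrak{o}^\times$'') and, for each nonzero $c$, representatives of $\mathfrak{o}/c\mathfrak{o}$ (''$a\in\mathfrak{o}/c\mathfrak{o}$''). $Y(\mathfrak{o})=\{\begin{pmatrix}a&b\\c&d\end{pmatrix}\in SL_2(\mathfrak{o}) : c\in(\mathfrak{o}-\{0\})/\mathfrak{o}^\times,\ a\in\mathfrak{o}/c\mathfrak{o}\}\cup\{I_2\}$. $\Gamma(3)=\{A\in SL_3(\mathfrak{o}):A\equiv I_3\pmod{3\mathfrak{o}}\}$ (entrywise), $\Gamma_\infty(3)$ its subgroup of upper triangular unipotent matrices. $D(3)$: diagonal $\mathrm{diag}(i,j,k)$ with $i,j,k\in\mathfrak{o}$, $ijk=1$. $U(3)$: matrices $\begin{pmatrix}1&\alpha&\beta\\&1&\gamma\\&&1\end{pmatrix}$ with $\alpha,\beta,\gamma\in\{0,1,2\}+\{0,1,2\}\omega$. For $y=\begin{pmatrix}a&b\\c&d\end{pmatrix}\in SL_2(\mathfrak{o})$, $\varphi_1(y)=\begin{pmatrix}a&b&0\\c&d&0\\0&0&1\end{pmatrix}$, $\varphi_2(y)=\begin{pmatrix}1&0&0\\0&a&b\\0&c&d\end{pmatrix}$. For $A=(a_{ij})\in SL_3(\mathfrak{o})$: $\Delta_2=\{A: a_{21}=a_{31}=0\}$, $\Delta_{1,0}=\{A:(a_{21}\neq0\text{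 or }a_{31}\neq0)\text{ and }a_{21}a_{32}-a_{22}a_{31}=0\}$, $\Delta_{1,1}=\{A: a_{21}a_{32}-a_{22}a_{31}\neq0\}$. *)

(* Defs.v *)
(* The Eisenstein integers o = Z[omega] are realised as a
   subset of the algebraic complex numbers algC. *)
From HB Require Import structures.
From mathcomp Require Import all_boot all_order all_algebra all_field.
Set Implicit Arguments. Unset Strict Implicit. Unset Printing Implicit Defensive.
Import Order.TTheory GRing.Theory Num.Theory.
Local Open Scope ring_scope.

(* omega = e^{2 pi i / 3} = (-1 + i sqrt 3)/2 *)
Definition omega : algC := (-1 + 'i * sqrtC 3) / 2.

Definition Eis (x : algC) : Prop :=
  exists a b : int, x = a%:~R + b%:~R * omega.

Definition Eis_unit (x : algC) : Prop :=
  Eis x /\ exists y, Eis y /\ x * y = 1.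

Definition Eis_assoc (x y : algC) : Prop :=
  exists e, Eis_unit e /\ x = e * y.

Definition Eis_congr (c x y : algC) : Prop :=
  exists t, Eis t /\ x - y = c * t.

Definition reps_units (R : algC -> Prop) : Prop :=
  (forall r, R r -> Eis r /\ r <> 0) /\
  (forall x, Eis x -> x <> 0 -> exists! r, R r /\ Eis_assoc x r).

Definition reps_mod (c : algC) (A : algC -> Prop) : Prop :=
  (forall r, A r -> Eis r) /\
  (forall x, Eis x -> exists! r, A r /\ Eis_congr c x r).

Definition SL_o (n : nat) (A : 'M[algC]_n) : Prop :=
  (forall i j, Eis (A i j)) /\ \det A = 1.

Definition o2_0 : 'I_2 := @Ordinal 2 0 isT.
Definition o2_1 : 'I_2 := @Ordinal 2 1 isT.
Definition o3_0 : 'I_3 := @Ordinal 3 0 isT.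
Definition o3_1 : 'I_3 := @Ordinal 3 1 isT.
Definition o3_2 : 'I_3 := @Ordinal 3 2 isT.

(* Y(o) relative to the chosen representatives Rc (of c) and Ra c (of a mod c) *)
Definition Yset (Rc : algC -> Prop) (Ra : algC -> algC -> Prop)
  (y : 'M[algC]_2) : Prop :=
  (SL_o y /\ Rc (y o2_1 o2_0) /\ Ra (y o2_1 o2_0) (y o2_0 o2_0)) \/ y = 1%:M.

Definition Gamma3 (A : 'M[algC]_3) : Prop :=
  SL_o A /\ forall i j, Eis_congr 3 (A i j) ((1%:M : 'M[algC]_3) i j).

Definition GammaInf3 (A : 'M[algC]_3) : Prop :=
  Gamma3 A /\ (forall i j : 'I_3, (j < i)%N -> A i j = 0) /\
  (forall i, A i i = 1).

Definition D3 (d : 'M[algC]_3) : Prop :=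
  (forall i j, i != j -> d i j = 0) /\ (forall i, Eis (d i i)) /\
  d o3_0 o3_0 * d o3_1 o3_1 * d o3_2 o3_2 = 1.

Definition S3 (x : algC) : Prop :=
  exists a b : nat, (a < 3)%N /\ (b < 3)%N /\ x = a%:R + b%:R * omega.

Definition U3 (u : 'M[algC]_3) : Prop :=
  (forall i, u i i = 1) /\ (forall i j : 'I_3, (j < i)%N -> u i j = 0) /\
  S3 (u o3_0 o3_1) /\ S3 (u o3_0 o3_2) /\ S3 (u o3_1 o3_2).

Definition phi1 (y : 'M[algC]_2) : 'M[algC]_3 :=
  \matrix_(i < 3, j < 3)
    if ((i < 2)%N && (j < 2)%N) then y (inord i) (inord j) else (i == j)%:R.
Definition phi2 (y : 'M[algC]_2) : 'M[algC]_3 :=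
  \matrix_(i < 3, j < 3)
    if ((0 < i)%N && (0 < j)%N) then y (inord i.-1) (inord j.-1)
    else (i == j)%:R.

Definition in_coset (g A : 'M[algC]_3) : Prop :=
  exists gam, GammaInf3 gam /\ A = g *m gam.

(* Delta_2, Delta_{1,0}, Delta_{1,1} (subsets of SL_3(o)); entries a_{21} etc.
   are A o3_1 o3_0 etc. (0-based indices) *)
Definition Delta2 (A : 'M[algC]_3) : Prop :=
  SL_o A /\ A o3_1 o3_0 = 0 /\ A o3_2 o3_0 = 0.
Definition Delta10 (A : 'M[algC]_3) : Prop :=
  SL_o A /\ (A o3_1 o3_0 <> 0 \/ A o3_2 o3_0 <> 0) /\
  A o3_1 o3_0 * A o3_2 o3_1 - A o3_1 o3_1 * A o3_2 o3_0 = 0.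
Definition Delta11 (A : 'M[algC]_3) : Prop :=
  SL_o A /\ A o3_1 o3_0 * A o3_2 o3_1 - A o3_1 o3_1 * A o3_2 o3_0 <> 0.

(* index set of all the cosets appearing in the three disjoint unions *)
Inductive cidx : Type :=
| Ix2 of 'M[algC]_2 & 'M[algC]_3 & 'M[algC]_3
| Ix10 of 'M[algC]_2 & 'M[algC]_2 & 'M[algC]_3 & 'M[algC]_3
| Ix11 of 'M[algC]_2 & 'M[algC]_2 & 'M[algC]_2 & 'M[algC]_3 & 'M[algC]_3.

Definition cidx_valid (Rc : algC -> Prop) (Ra : algC -> algC -> Prop)
  (k : cidx) : Prop :=
  match k with
  | Ix2 y d u => Yset Rc Ra y /\ D3 d /\ U3 u
  | Ix10 y1 y2 d u =>
      Yset Rc Ra y1 /\ Yset Rc Ra y2 /\ y2 <> 1%:M /\ D3 d /\ U3 u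
  | Ix11 y1 y2 y3 d u =>
      Yset Rc Ra y1 /\ Yset Rc Ra y2 /\ Yset Rc Ra y3 /\
      y2 <> 1%:M /\ y3 <> 1%:M /\ D3 d /\ U3 u
  end.

Definition cidx_lead (k : cidx) : 'M[algC]_3 :=
  match k with
  | Ix2 y d u => phi2 (invmx y) *m d *m u
  | Ix10 y1 y2 d u => phi2 (invmx y1) *m phi1 (invmx y2) *m d *m u
  | Ix11 y1 y2 y3 d u =>
      phi2 (invmx y1) *m phi1 (invmx y2) *m phi2 (invmx y3) *m d *m u
  end.

(* Main.v *)
Require Import Defs.
From HB Require Import structures.
From mathcomp Require Import all_boot all_order all_algebra all_field.
From mathcomp Require Import zify ring.
Import Order.TTheory GRing.Theory Num.Theory.
Local Open Scope ring_scope.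

Definition mx3 (a00 a01 a02 a10 a11 a12 a20 a21 a22 : algC) : 'M[algC]_3 :=
  \matrix_(i < 3, j < 3) nth 0 (nth [::] [:: [:: a00; a01; a02]; [:: a10; a11; a12]; [:: a20; a21; a22]] i) j.
Definition mx2 (a00 a01 a10 a11 : algC) : 'M[algC]_2 :=
  \matrix_(i < 2, j < 2) nth 0 (nth [::] [:: [:: a00; a01]; [:: a10; a11]] i) j.

Lemma mx3_mul a00 a01 a02 a10 a11 a12 a20 a21 a22 b00 b01 b02 b10 b11 b12 b20 b21 b22 :
  mx3 a00 a01 a02 a10 a11 a12 a20 a21 a22 *m mx3 b00 b01 b02 b10 b11 b12 b20 b21 b22 =
  mx3 (a00*b00+a01*b10+a02*b20) (a00*b01+a01*b11+a02*b21) (a00*b02+a01*b12+a02*b22)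
      (a10*b00+a11*b10+a12*b20) (a10*b01+a11*b11+a12*b21) (a10*b02+a11*b12+a12*b22)
      (a20*b00+a21*b10+a22*b20) (a20*b01+a21*b11+a22*b21) (a20*b02+a21*b12+a22*b22).
Proof.
apply/matrixP => i j; rewrite !mxE !big_ord_recl big_ord0 !mxE /= addr0 ?addrA.
by case: i => [[|[|[|?]]] ?]; case: j => [[|[|[|?]]] ?].
Qed.

Lemma mx2_mul a00 a01 a10 a11 b00 b01 b10 b11 :
  mx2 a00 a01 a10 a11 *m mx2 b00 b01 b10 b11 =
  mx2 (a00*b00+a01*b10) (a00*b01+a01*b11) (a10*b00+a11*b10) (a10*b01+a11*b11).
Proof.
apply/matrixP => i j; rewrite !mxE !big_ord_recl big_ord0 !mxE /= addr0 ?addrA.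
by case: i => [[|[|?]] ?]; case: j => [[|[|?]] ?].
Qed.

Lemma det_mx2 a00 a01 a10 a11 : \det (mx2 a00 a01 a10 a11) = a00 * a11 - a01 * a10.
Proof.
rewrite (expand_det_row _ ord0) !big_ord_recl big_ord0 /cofactor !det_mx11 !mxE /=.
rewrite /bump /=; ring.
Qed.

Lemma det_mx3 a00 a01 a02 a10 a11 a12 a20 a21 a22 :
  \det (mx3 a00 a01 a02 a10 a11 a12 a20 a21 a22) =
  a00 * (a11 * a22 - a12 * a21) - a01 * (a10 * a22 - a12 * a20) + a02 * (a10 * a21 - a11 * a20).
Proof.
rewrite (expand_det_row _ ord0) !big_ord_recl big_ord0 /cofactor.
rewrite !(expand_det_row _ ord0) !big_ord_recl big_ord0 /cofactor !det_mx11 !mxE /=.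
rewrite /bump /= !big_ord0. ring.
Qed.

Lemma mx3E (M : 'M[algC]_3) : M = mx3 (M o3_0 o3_0) (M o3_0 o3_1) (M o3_0 o3_2)
  (M o3_1 o3_0) (M o3_1 o3_1) (M o3_1 o3_2) (M o3_2 o3_0) (M o3_2 o3_1) (M o3_2 o3_2).
Proof.
apply/matrixP => i j; rewrite mxE.
by case: i => [[|[|[|?]]] Hi]; case: j => [[|[|[|?]]] Hj] //=; congr (M _ _); apply/val_inj.
Qed.

Lemma mx2E (M : 'M[algC]_2) : M = mx2 (M o2_0 o2_0) (M o2_0 o2_1) (M o2_1 o2_0) (M o2_1 o2_1).
Proof.
apply/matrixP => i j; rewrite mxE.
by case: i => [[|[|?]] Hi]; case: j => [[|[|?]] Hj] //=; congr (M _ _); apply/val_inj.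
Qed.

Lemma mx3_inj a00 a01 a02 a10 a11 a12 a20 a21 a22 b00 b01 b02 b10 b11 b12 b20 b21 b22 :
  mx3 a00 a01 a02 a10 a11 a12 a20 a21 a22 = mx3 b00 b01 b02 b10 b11 b12 b20 b21 b22 ->
  (a00 = b00 /\ a01 = b01 /\ a02 = b02) /\ (a10 = b10 /\ a11 = b11 /\ a12 = b12) /\ (a20 = b20 /\ a21 = b21 /\ a22 = b22).
Proof.
move=> h.
have e : forall i j, mx3 a00 a01 a02 a10 a11 a12 a20 a21 a22 i j = mx3 b00 b01 b02 b10 b11 b12 b20 b21 b22 i j by rewrite h.
move: (e o3_0 o3_0) (e o3_0 o3_1) (e o3_0 o3_2) (e o3_1 o3_0) (e o3_1 o3_1) (e o3_1 o3_2) (e o3_2 o3_0) (e o3_2 o3_1) (e o3_2 o3_2).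
by rewrite !mxE /= => *.
Qed.

Lemma mx2_inj a00 a01 a10 a11 b00 b01 b10 b11 :
  mx2 a00 a01 a10 a11 = mx2 b00 b01 b10 b11 -> [/\ a00 = b00, a01 = b01, a10 = b10 & a11 = b11].
Proof.
move=> h.
have e : forall i j, mx2 a00 a01 a10 a11 i j = mx2 b00 b01 b10 b11 i j by rewrite h.
move: (e o2_0 o2_0) (e o2_0 o2_1) (e o2_1 o2_0) (e o2_1 o2_1).
by rewrite !mxE /= => *.
Qed.

Lemma inord0_2 : inord 0 = o2_0. Proof. by apply/val_inj; rewrite /= inordK. Qed.
Lemma inord1_2 : inord 1 = o2_1. Proof. by apply/val_inj; rewrite /= inordK. Qed.

Lemma phi2E (y : 'M[algC]_2) : phi2 y = mx3 1 0 0 0 (y o2_0 o2_0) (y o2_0 o2_1) 0 (y o2_1 o2_0) (y o2_1 o2_1).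
Proof.
apply/matrixP => i j; rewrite !mxE.
by case: i => [[|[|[|?]]] Hi]; case: j => [[|[|[|?]]] Hj] //=; rewrite ?inord0_2 ?inord1_2.
Qed.

Lemma phi1E (y : 'M[algC]_2) : phi1 y = mx3 (y o2_0 o2_0) (y o2_0 o2_1) 0 (y o2_1 o2_0) (y o2_1 o2_1) 0 0 0 1.
Proof.
apply/matrixP => i j; rewrite !mxE.
by case: i => [[|[|[|?]]] Hi]; case: j => [[|[|[|?]]] Hj] //=; rewrite ?inord0_2 ?inord1_2.
Qed.

Lemma one3E : (1%:M : 'M[algC]_3) = mx3 1 0 0 0 1 0 0 0 1.
Proof.
apply/matrixP => i j; rewrite !mxE.
by case: i => [[|[|[|?]]] Hi]; case: j => [[|[|[|?]]] Hj].
Qed.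

Lemma one2E : (1%:M : 'M[algC]_2) = mx2 1 0 0 1.
Proof.
apply/matrixP => i j; rewrite !mxE.
by case: i => [[|[|?]] Hi]; case: j => [[|[|?]] Hj].
Qed.

Lemma inv2E (y : 'M[algC]_2) : \det y = 1 ->
  invmx y = mx2 (y o2_1 o2_1) (- y o2_0 o2_1) (- y o2_1 o2_0) (y o2_0 o2_0).
Proof.
move=> hd.
have hu : y \in unitmx by rewrite unitmxE hd unitr1.
have h1 : mx2 (y o2_1 o2_1) (- y o2_0 o2_1) (- y o2_1 o2_0) (y o2_0 o2_0) *m y = 1%:M.
  have hy := mx2E y.
  move: hd hy; set a := y o2_0 o2_0; set b := y o2_0 o2_1; set c := y o2_1 o2_0; set d := y o2_1 o2_1.
  move=> hd hy; move: hd; rewrite hy det_mx2 mx2_mul one2E => hd.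
  by congr mx2; first [rewrite -hd; ring | ring].
by rewrite -[RHS]mulmx1 -(mulmxV hu) mulmxA h1 mul1mx.
Qed.

Lemma omega2 : omega ^+ 2 + omega + 1 = 0.
Proof.
have hi : 'i ^+ 2 = -1 :> algC by rewrite sqrCi.
have hs : sqrtC 3 ^+ 2 = 3 :> algC by rewrite sqrtCK.
rewrite /omega.
have -> : ((-1 + 'i * sqrtC 3) / 2) ^+ 2 = (1 - 2 * ('i * sqrtC 3) + ('i * sqrtC 3) ^+ 2) / 4 :> algC.
  by field.
by rewrite exprMn hi hs; field.
Qed.

Lemma om_eq (X Y k : algC) : X - Y = k * (omega ^+ 2 + omega + 1) -> X = Y.
Proof. by rewrite omega2 mulr0 => /eqP; rewrite subr_eq0 => /eqP. Qed.

Definition E (a b : int) : algC := a%:~R + b%:~R * omega.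

Lemma EisE x : Eis x <-> exists a b, x = E a b.
Proof. by []. Qed.

Lemma Eis0 : Eis 0. Proof. by exists 0, 0; rewrite /E !mulr0z mul0r addr0. Qed.
Lemma Eis1 : Eis 1. Proof. by exists 1, 0; rewrite mulr0z mul0r addr0. Qed.
Lemma EisD x y : Eis x -> Eis y -> Eis (x + y).
Proof. move=> [a [b ->]] [c [d ->]]; exists (a + c), (b + d); rewrite !intrD; ring. Qed.
Lemma EisN x : Eis x -> Eis (- x).
Proof. move=> [a [b ->]]; exists (- a), (- b); rewrite !intrN; ring. Qed.
Lemma EisB x y : Eis x -> Eis y -> Eis (x - y).
Proof. by move=> hx hy; apply: EisD => //; apply: EisN. Qed.
Lemma EisM x y : Eis x -> Eis y -> Eis (x * y).
Proof.
move=> [a [b ->]] [c [d ->]]; exists (a * c - b * d), (a * d + b * c - b * d).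
apply: om_eq (b%:~R * d%:~R) _; rewrite !intrD !intrN !intrM; ring.
Qed.
Lemma Eis_nat n : Eis n%:R.
Proof. by exists n%:Z, 0; rewrite mul0r addr0. Qed.
Lemma Eis_omega : Eis omega.
Proof. by exists 0, 1; rewrite add0r mul1r. Qed.

Arguments EisD {x y}.
Arguments EisN {x}.
Arguments EisB {x y}.
Arguments EisM {x y}.

Lemma Eis_E a b : Eis (E a b). Proof. by exists a, b. Qed.
Lemma Eis_int z : Eis z%:~R. Proof. by exists z, 0; rewrite mul0r addr0. Qed.

Ltac eis := repeat first [ assumption | apply: Eis0 | apply: Eis1 | apply: Eis_E | apply: Eis_int | apply: Eis_omega | apply: Eis_nat | apply: EisD | apply: EisN | apply: EisM | apply: Eis_omega | apply: Eis_nat ].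

Lemma E0 (p q : int) : p%:~R + q%:~R * omega = 0 :> algC -> p = 0 /\ q = 0.
Proof.
move=> h0.
have hn : (p * p - p * q + q * q)%:~R = (p%:~R + q%:~R * omega) * (p%:~R + q%:~R * (-1 - omega)) :> algC.
  apply: om_eq (q%:~R * q%:~R) _; rewrite !intrD !intrN !intrM; ring.
rewrite h0 mul0r in hn; move/eqP: hn; rewrite intr_eq0 => /eqP hn.
by split; nia.
Qed.

Lemma E_inj a b c d : E a b = E c d -> a = c /\ b = d.
Proof.
move=> h.
have h' : E a b - E c d = 0 by rewrite h subrr.
have [h1 h2] : a - c = 0 /\ b - d = 0.
  by apply: E0; rewrite !intrB -h' /E; ring.
by split; apply/eqP; rewrite -subr_eq0; apply/eqP.
Qed.

Lemma E00 : E 0 0 = 0. Proof. by rewrite /E mul0r addr0. Qed.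

Definition nrm (a b : int) : int := a * a - a * b + b * b.

Lemma EM a b c d : E a b * E c d = E (a * c - b * d) (a * d + b * c - b * d).
Proof. apply: om_eq (b%:~R * d%:~R) _; rewrite /E !intrD !intrN !intrM; ring. Qed.
Lemma EB a b c d : E a b - E c d = E (a - c) (b - d).
Proof. rewrite /E !intrB; ring. Qed.

Lemma round_ex (m N : int) : 0 < N -> exists q : int, - N <= 2 * (m - q * N) <= N.
Proof. move=> hN; exists ((2 * m + N) %/ (2 * N))%Z; lia. Qed.

Lemma nrm_ge0 a b : 0 <= nrm a b.
Proof. rewrite /nrm; nia. Qed.
Lemma nrm_eq0 {a b : int} : nrm a b = 0 -> a = 0 /\ b = 0.
Proof. rewrite /nrm => h; split; nia. Qed.

Lemma div_pair x1 x2 y1 y2 : 0 < nrm y1 y2 -> exists q1 q2,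
  nrm (x1 - (q1 * y1 - q2 * y2)) (x2 - (q1 * y2 + q2 * y1 - q2 * y2)) < nrm y1 y2.
Proof.
move=> hN.
set N := nrm y1 y2.
set m := x1 * y1 - x1 * y2 + x2 * y2.
set n := - x1 * y2 + x2 * y1.
have [q1 hq1] := round_ex m N hN.
have [q2 hq2] := round_ex n N hN.
exists q1, q2.
set r1 := x1 - _; set r2 := x2 - _.
have key : nrm r1 r2 * N = nrm (m - q1 * N) (n - q2 * N).
  by rewrite /r1 /r2 /N /m /n /nrm; ring.
set e1 := m - q1 * N in hq1 key; set e2 := n - q2 * N in hq2 key.
have h4 : 4 * nrm e1 e2 <= 3 * N * N.
  rewrite /nrm; nia.
have hr := nrm_ge0 r1 r2.
nia.
Qed.

Lemma Eis_pair x : Eis x -> exists a b, x = E a b.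
Proof. by []. Qed.

Lemma bezout_aux (k : nat) : forall y1 y2 x1 x2 : int, (`|nrm y1 y2| < k)%N ->
  (E x1 x2 <> 0 \/ E y1 y2 <> 0) ->
  exists g x' y' s t, [/\ Eis g, Eis x', Eis y', Eis s & Eis t] /\
     E x1 x2 = g * x' /\ E y1 y2 = g * y' /\ s * x' + t * y' = 1.
Proof.
elim: k => [|k IH] y1 y2 x1 x2 //.
move=> hk hne.
have [hy0|hyn] := boolP (nrm y1 y2 == 0).
  have [e1 e2] := nrm_eq0 (eqP hy0); subst y1 y2.
  have hx : E x1 x2 <> 0.
    by case: hne => // h; exfalso; apply: h; rewrite E00.
  exists (E x1 x2), 1, 0, 1, 0; split; first by split; eis.
  by rewrite E00 mulr1 mulr0 mulr1 mulr0 addr0.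
have hN : 0 < nrm y1 y2 by have := nrm_ge0 y1 y2; move: hyn; lia.
have [q1 [q2 hq]] := div_pair x1 x2 y1 y2 hN.
set r1 := x1 - _ in hq; set r2 := x2 - _ in hq.
have hy : E y1 y2 <> 0.
  move=> h; have : E y1 y2 = E 0 0 by rewrite h E00.
  by move/E_inj => [h1 h2]; move: hyn; rewrite h1 h2.
have hk' : (`|nrm r1 r2| < k)%N.
  have := nrm_ge0 r1 r2; move: hk hq; lia.
have [g [x' [y' [s [t [[hg hx' hy' hs ht] [e1 [e2 e3]]]]]]]] := IH r1 r2 y1 y2 hk' (or_introl hy).
have hxr : E x1 x2 = E q1 q2 * E y1 y2 + E r1 r2.
  by rewrite EM /r1 /r2 /E !intrD !intrN !intrM; ring.
have hq' : Eis (E q1 q2) by exists q1, q2.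
exists g, (E q1 q2 * x' + y'), x', t, (s - t * E q1 q2); split; first by split; eis.
split; first by rewrite hxr e1 e2; ring.
split; first by [].
by rewrite -e3; ring.
Qed.

Lemma bezout x y : Eis x -> Eis y -> (x <> 0 \/ y <> 0) ->
  exists g x' y' s t, [/\ Eis g, Eis x', Eis y', Eis s & Eis t] /\
     x = g * x' /\ y = g * y' /\ s * x' + t * y' = 1.
Proof.
move=> [x1 [x2 ->]] [y1 [y2 ->]] h.
exact: (@bezout_aux (`|nrm y1 y2|).+1).
Qed.

Lemma det2E (y : 'M[algC]_2) : \det y = y o2_0 o2_0 * y o2_1 o2_1 - y o2_0 o2_1 * y o2_1 o2_0.
Proof. by rewrite {1}(mx2E y) det_mx2. Qed.

Lemma SL2_facts {y : 'M[algC]_2} : SL_o y ->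
  [/\ Eis (y o2_0 o2_0), Eis (y o2_0 o2_1), Eis (y o2_1 o2_0), Eis (y o2_1 o2_1) &
      y o2_0 o2_0 * y o2_1 o2_1 - y o2_0 o2_1 * y o2_1 o2_0 = 1].
Proof. by move=> [he hd]; split => //; rewrite -hd det2E. Qed.

Section Ysec.
Variables (Rc : algC -> Prop) (Ra : algC -> algC -> Prop).
Hypothesis hRc : reps_units Rc.
Hypothesis hRa : forall c, Eis c -> c <> 0 -> reps_mod c (Ra c).

Lemma Y_facts {y} : Yset Rc Ra y ->
  [/\ Eis (y o2_0 o2_0), Eis (y o2_0 o2_1), Eis (y o2_1 o2_0), Eis (y o2_1 o2_1) &
      y o2_0 o2_0 * y o2_1 o2_1 - y o2_0 o2_1 * y o2_1 o2_0 = 1].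
Proof.
case=> [[hs _]|->]; first exact: SL2_facts.
rewrite one2E !mxE /=; split; eis; ring.
Qed.

Lemma Y_SL {y} : Yset Rc Ra y -> SL_o y.
Proof.
move=> hy; have [h1 h2 h3 h4 h5] := Y_facts hy.
split; last by rewrite det2E.
by move=> i j; case: i => [[|[|?]] Hi]; case: j => [[|[|?]] Hj] //=;
  [have -> : Ordinal Hi = o2_0 by apply/val_inj | have -> : Ordinal Hi = o2_0 by apply/val_inj
  | have -> : Ordinal Hi = o2_1 by apply/val_inj | have -> : Ordinal Hi = o2_1 by apply/val_inj];
  [have -> : Ordinal Hj = o2_0 by apply/val_inj | have -> : Ordinal Hj = o2_1 by apply/val_inj
  | have -> : Ordinal Hj = o2_0 by apply/val_inj | have -> : Ordinal Hj = o2_1 by apply/val_inj].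
Qed.

Lemma Y_c0 y : Yset Rc Ra y -> y o2_1 o2_0 = 0 -> y = 1%:M.
Proof.
case=> [[_ [hc _]] h0|//].
by exfalso; have [/(_ _ hc) [_ ]] := hRc; rewrite h0.
Qed.

Lemma Y_cn0 y : Yset Rc Ra y -> y <> 1%:M -> y o2_1 o2_0 <> 0.
Proof. by move=> hy hn h0; apply: hn; apply: Y_c0. Qed.

Lemma Y_exists p q s t : Eis p -> Eis q -> Eis s -> Eis t -> s * p + t * q = 1 ->
  exists y l, Yset Rc Ra y /\ Eis_unit l /\ y o2_1 o2_0 = l * p /\ y o2_1 o2_1 = l * q.
Proof.
move=> hp hq hs ht hst.
have [p0|pn0] := eqVneq p 0.
  exists 1%:M, t; split; first by right.
  split; first by split => //; exists q; split => //; rewrite -hst p0; ring.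
  by rewrite one2E !mxE /= p0 mulr0; split => //; rewrite -hst p0; ring.
have pn0' : p <> 0 by apply/eqP.
have [_ /(_ p hp pn0') [c [[hc [e [[he [e' [he' hee']]] hpc]]] _]]] := hRc.
have [hRc1 _] := hRc.
have [hcE hc0] := hRc1 c hc.
set d := e' * q.
have hcd : (s * e) * c + (t * e) * d = 1.
  by rewrite -hst hpc /d; rewrite -[in RHS](mul1r q) -hee'; ring.
have [hRa1 hRa2] := hRa c hcE hc0.
have hte : Eis (t * e) by eis.
have [a [[ha [k [hk hak]]] _]] := hRa2 _ hte.
set b := - (s * e) - k * d.
have hdet : a * d - b * c = 1.
  rewrite -hcd /b.
  have -> : a = t * e - c * k by rewrite -hak; ring.
  ring.
exists (mx2 a b c d), e'.
split.
  left; split; last by rewrite !mxE /=.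
  split; last by rewrite det_mx2.
  have haE := hRa1 _ ha.
  by move=> i j; rewrite mxE; case: i => [[|[|?]] Hi]; case: j => [[|[|?]] Hj] //=; rewrite /b /d; eis.
split; first by split => //; exists e; split => //; rewrite mulrC.
rewrite !mxE /=; split => //.
by rewrite hpc mulrA (mulrC e') hee' mul1r.
Qed.

Lemma Y_uniq y y' l : Yset Rc Ra y -> Yset Rc Ra y' ->
  y' o2_1 o2_0 = l * y o2_1 o2_0 -> y' o2_1 o2_1 = l * y o2_1 o2_1 -> y = y' /\ l = 1.
Proof.
move=> hy hy'.
have [ha hb hc hd hdet] := Y_facts hy.
have [ha' hb' hc' hd' hdet'] := Y_facts hy'.
move: hy hy' ha hb hc hd hdet ha' hb' hc' hd' hdet'.
have Ey := mx2E y; have Ey' := mx2E y'.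
move: Ey Ey'.
set a := y o2_0 o2_0; set b := y o2_0 o2_1; set c := y o2_1 o2_0; set d := y o2_1 o2_1.
set a' := y' o2_0 o2_0; set b' := y' o2_0 o2_1; set c' := y' o2_1 o2_0; set d' := y' o2_1 o2_1.
move=> Ey Ey' hy hy' ha hb hc hd hdet ha' hb' hc' hd' hdet' ec ed.
have hlinv : l * (a' * d - b' * c) = 1 by rewrite -hdet' ec ed; ring.
have hlE : Eis l.
  have -> : l = a * d' - b * c' by rewrite ec ed -[LHS]mulr1 -hdet; ring.
  eis.
have hunit : Eis_unit (a' * d - b' * c) by split; [eis | exists l; split => //; rewrite mulrC].
have [c0|cn0] := eqVneq c 0.
  have y1 : y = 1%:M by apply: Y_c0.
  have c'0 : c' = 0 by rewrite ec c0 mulr0.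
  have y'1 : y' = 1%:M by apply: Y_c0.
  split; first by rewrite y1 y'1.
  move: ed; rewrite /d /d' y1 y'1 one2E !mxE /= => ed.
  by rewrite -[l]mulr1 -ed.
have cn0' : c <> 0 by apply/eqP.
have [hRc1 hRc2] := hRc.
have yn1 : y <> 1%:M by move=> e; apply: cn0'; rewrite /c e one2E mxE.
case: hy => [[_ [hRcc hRaa]]|//].
have [r [_ hr]] := hRc2 c hc cn0'.
have e1 : c = r.
  symmetry; apply: hr; split => //; exists 1; split; last by rewrite mul1r.
  by split; eis; exists 1; split; eis; rewrite mulr1.
have c'n0 : c' <> 0 by rewrite ec; apply/eqP; rewrite mulf_eq0 negb_or cn0 andbT; apply/eqP => l0; move: hlinv; rewrite l0 mul0r => /eqP; rewrite eq_sym oner_eq0.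
have y'n1 : y' <> 1%:M by move=> e; apply: c'n0; rewrite /c' e one2E mxE.
case: hy' => [[_ [hRcc' hRaa']]|//].
have e2 : c' = r.
  symmetry; apply: hr; split => //; exists (a' * d - b' * c); split => //.
  by rewrite ec mulrA (mulrC _ l) hlinv mul1r.
have cc : c' = c by rewrite e1 e2.
have l1 : l = 1.
  by apply: (mulIf cn0); rewrite -ec cc mul1r.
have dd : d' = d by rewrite ed l1 mul1r.
have [hRa1 hRa2] := hRa c hc cn0'.
have [rr [_ hrr]] := hRa2 a ha.
have aa : a = a'.
  have e3 : a = rr by symmetry; apply: hrr; split => //; exists 0; split; [eis | by rewrite subrr mulr0].
  have e4 : a' = rr.
    symmetry; apply: hrr; split; first by rewrite -cc.
    exists (a' * b - a * b'); split; first by eis.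
    have -> : a - a' = a * (a' * d' - b' * c') - a' * (a * d - b * c) by rewrite hdet hdet' !mulr1.
    rewrite cc dd; ring.
  by rewrite e3 e4.
have bb : b = b'.
  apply: (mulIf cn0).
  have h1 : b * c = a * d - 1 by rewrite -hdet; ring.
  have h2 : b' * c = a * d - 1 by rewrite -hdet' -aa cc dd; ring.
  by rewrite h1 h2.
by split => //; rewrite Ey Ey' -aa -bb cc dd.
Qed.
End Ysec.
Arguments Y_facts {Rc Ra y}.
Arguments Y_SL {Rc Ra y}.
Arguments Y_c0 {Rc Ra} hRc {y}.
Arguments Y_cn0 {Rc Ra} hRc {y}.
Arguments Y_exists {Rc Ra} hRc hRa {p q s t}.
Arguments Y_uniq {Rc Ra} hRc hRa {y y' l}.
Lemma Y_ex2 {Rc Ra} (hRc : reps_units Rc) (hRa : forall c, Eis c -> c <> 0 -> reps_mod c (Ra c)) {p q s t} :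
  s * p + t * q = 1 -> Eis p -> Eis q -> Eis s -> Eis t ->
  exists y l, Yset Rc Ra y /\ Eis_unit l /\ y o2_1 o2_0 = l * p /\ y o2_1 o2_1 = l * q.
Proof. move=> h hp hq hs ht; exact: (Y_exists hRc hRa hp hq hs ht h). Qed.

Lemma natrz (a : nat) : (a%:R : algC) = (a%:Z)%:~R. Proof. by []. Qed.
Lemma small3 (z : int) : 0 <= z < 3 -> exists k : nat, (k < 3)%N /\ (z%:~R : algC) = k%:R.
Proof. move=> h; exists `|z|%N; split; first by lia. by rewrite natrz gez0_abs //; lia. Qed.

Lemma forall3 (P : 'I_3 -> 'I_3 -> Prop) :
  P o3_0 o3_0 -> P o3_0 o3_1 -> P o3_0 o3_2 -> P o3_1 o3_0 -> P o3_1 o3_1 -> P o3_1 o3_2 ->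
  P o3_2 o3_0 -> P o3_2 o3_1 -> P o3_2 o3_2 -> forall i j, P i j.
Proof.
move=> h00 h01 h02 h10 h11 h12 h20 h21 h22 i j.
case: i => [[|[|[|?]]] Hi]; case: j => [[|[|[|?]]] Hj] //;
 first [ have -> : Ordinal Hi = o3_0 by apply/val_inj | have -> : Ordinal Hi = o3_1 by apply/val_inj
       | have -> : Ordinal Hi = o3_2 by apply/val_inj ];
 first [ have -> : Ordinal Hj = o3_0 by apply/val_inj | have -> : Ordinal Hj = o3_1 by apply/val_inj
       | have -> : Ordinal Hj = o3_2 by apply/val_inj ] => //.
Qed.

Lemma S3_rep x : Eis x -> exists s, S3 s /\ Eis_congr 3 x s.
Proof.
move=> [m [n ->]].
have [a [ha ea]] := @small3 (m %% 3)%Z ltac:(lia).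
have [b [hb eb]] := @small3 (n %% 3)%Z ltac:(lia).
exists (a%:R + b%:R * omega); split; first by exists a, b.
exists (E (m %/ 3)%Z (n %/ 3)%Z); split; first by eis.
rewrite -ea -eb /E {1}(divz_eq m 3) {1}(divz_eq n 3) !intrD !intrM; ring.
Qed.

Lemma S3_uniq {s s'} : S3 s -> S3 s' -> Eis_congr 3 s s' -> s = s'.
Proof.
move=> [a [b [ha [hb ->]]]] [a' [b' [ha' [hb' ->]]]] [t [[m [n ->]] h]].
have [h1 h2] : (a%:Z - a'%:Z - 3 * m) = 0 /\ (b%:Z - b'%:Z - 3 * n) = 0.
  apply: E0.
  transitivity ((a%:R + b%:R * omega - (a'%:R + b'%:R * omega)) - 3 * E m n); last by rewrite h subrr.
  rewrite /E !intrB !intrM -!natrz; ring.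
have ea : a = a' by lia.
have eb : b = b' by lia.
by rewrite ea eb.
Qed.

Lemma D3E {d} : D3 d -> d = mx3 (d o3_0 o3_0) 0 0 0 (d o3_1 o3_1) 0 0 0 (d o3_2 o3_2).
Proof.
move=> [hz _]; rewrite {1}(mx3E d).
by rewrite (hz o3_0 o3_1) // (hz o3_0 o3_2) // (hz o3_1 o3_0) // (hz o3_1 o3_2) // (hz o3_2 o3_0) // (hz o3_2 o3_1).
Qed.

Lemma U3E {u} : U3 u -> u = mx3 1 (u o3_0 o3_1) (u o3_0 o3_2) 0 1 (u o3_1 o3_2) 0 0 1.
Proof.
move=> [hd [hl _]]; rewrite {1}(mx3E u).
by rewrite !hd (hl o3_1 o3_0) // (hl o3_2 o3_0) // (hl o3_2 o3_1).
Qed.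

Lemma GE {g} : GammaInf3 g -> g = mx3 1 (g o3_0 o3_1) (g o3_0 o3_2) 0 1 (g o3_1 o3_2) 0 0 1.
Proof.
move=> [_ [hl hd]]; rewrite {1}(mx3E g).
by rewrite !hd (hl o3_1 o3_0) // (hl o3_2 o3_0) // (hl o3_2 o3_1).
Qed.

Lemma G3c {g} : GammaInf3 g -> [/\ Eis_congr 3 (g o3_0 o3_1) 0, Eis_congr 3 (g o3_0 o3_2) 0 & Eis_congr 3 (g o3_1 o3_2) 0].
Proof.
move=> [[_ hc] _].
have := hc o3_0 o3_1; have := hc o3_0 o3_2; have := hc o3_1 o3_2.
by rewrite !mxE /=.
Qed.

Lemma dug {d u g} : D3 d -> U3 u -> GammaInf3 g ->
  d *m u *m g = mx3 (d o3_0 o3_0) (d o3_0 o3_0 * (u o3_0 o3_1 + g o3_0 o3_1))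
     (d o3_0 o3_0 * (g o3_0 o3_2 + u o3_0 o3_1 * g o3_1 o3_2 + u o3_0 o3_2))
     0 (d o3_1 o3_1) (d o3_1 o3_1 * (u o3_1 o3_2 + g o3_1 o3_2)) 0 0 (d o3_2 o3_2).
Proof.
move=> hd hu hg.
rewrite {1}(D3E hd) {1}(U3E hu) {1}(GE hg) !mx3_mul.
congr mx3; ring.
Qed.

Lemma Eis_congr_0 x : Eis x -> Eis_congr 3 x 0 -> exists t, Eis t /\ x = 3 * t.
Proof. by move=> _ [t [ht h]]; exists t; split => //; rewrite -h subr0. Qed.

Lemma eq_from {X Y P Q : algC} : X - Y = P - Q -> P = Q -> X = Y.
Proof. by move=> h e; apply/eqP; rewrite -subr_eq0 h e subrr. Qed.

Lemma cong_helper {x x' p p'} : Eis_congr 3 p 0 -> Eis_congr 3 p' 0 -> x + p = x' + p' -> Eis_congr 3 x x'.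
Proof.
move=> [t [ht hp]] [t' [ht' hp']] h; exists (t' - t); split; first by eis.
have hp2 : p = 3 * t by rewrite -hp subr0.
have hp2' : p' = 3 * t' by rewrite -hp' subr0.
by apply: (eq_from _ h); rewrite hp2 hp2'; ring.
Qed.

Lemma du_uniq {d u g d' u' g'} : D3 d -> U3 u -> GammaInf3 g -> D3 d' -> U3 u' -> GammaInf3 g' ->
  d *m u *m g = d' *m u' *m g' -> d = d' /\ u = u'.
Proof.
move=> hd hu hg hd' hu' hg'.
rewrite (dug hd hu hg) (dug hd' hu' hg') => /mx3_inj [[e00 [e01 e02]] [[_ [e11 e12]] [_ [_ e22]]]].
have [_ [hdE _]] := hd.
have d0 : d o3_0 o3_0 != 0.
  by apply/eqP; case: hd => _ [_ hp] h0; move: hp; rewrite h0 !mul0r => /eqP; rewrite eq_sym oner_eq0.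
have d1 : d o3_1 o3_1 != 0.
  by apply/eqP; case: hd => _ [_ hp] h0; move: hp; rewrite h0 mulr0 mul0r => /eqP; rewrite eq_sym oner_eq0.
have [c01 c02 c12] := G3c hg.
have [c01' c02' c12'] := G3c hg'.
have [_ [_ [s01 [s02 s12]]]] := hu.
have [_ [_ [s01' [s02' s12']]]] := hu'.
rewrite -e00 in e01 e02; rewrite -e11 in e12.
move/(mulfI d0): e01 => f01; move/(mulfI d0): e02 => f02; move/(mulfI d1): e12 => f12.
have eu01 := S3_uniq s01 s01' (cong_helper c01 c01' f01).
have eu12 := S3_uniq s12 s12' (cong_helper c12 c12' f12).
have eg01 : g o3_1 o3_2 = g' o3_1 o3_2 by move: f12; rewrite eu12 => /addrI.
have f02' : u o3_0 o3_2 + g o3_0 o3_2 = u' o3_0 o3_2 + g' o3_0 o3_2.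
  by apply: (eq_from _ f02); rewrite eu01 eg01; ring.
have eu02 := S3_uniq s02 s02' (cong_helper c02 c02' f02').
split; first by rewrite (D3E hd) (D3E hd') e00 e11 e22.
by rewrite (U3E hu) (U3E hu') eu01 eu02 eu12.
Qed.

Lemma S3_Eis {s} : S3 s -> Eis s.
Proof. by move=> [a [b [_ [_ ->]]]]; eis. Qed.

Lemma forall3_1 (P : 'I_3 -> Prop) : P o3_0 -> P o3_1 -> P o3_2 -> forall i, P i.
Proof.
move=> h0 h1 h2 i.
case: i => [[|[|[|?]]] Hi] //;
 first [ have -> : Ordinal Hi = o3_0 by apply/val_inj | have -> : Ordinal Hi = o3_1 by apply/val_inj
       | have -> : Ordinal Hi = o3_2 by apply/val_inj ] => //.
Qed.

Lemma rel_eq {X Y R : algC} k : X - Y = k * R -> R = 0 -> X = Y.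
Proof. by move=> h e; apply/eqP; rewrite -subr_eq0 h e mulr0. Qed.

Lemma mx3_Eis a00 a01 a02 a10 a11 a12 a20 a21 a22 :
  Eis a00 -> Eis a01 -> Eis a02 -> Eis a10 -> Eis a11 -> Eis a12 -> Eis a20 -> Eis a21 -> Eis a22 ->
  forall i j, Eis (mx3 a00 a01 a02 a10 a11 a12 a20 a21 a22 i j).
Proof. move=> h1 h2 h3 h4 h5 h6 h7 h8 h9; by apply: forall3; rewrite mxE. Qed.

Lemma borel B : SL_o B -> B o3_1 o3_0 = 0 -> B o3_2 o3_0 = 0 -> B o3_2 o3_1 = 0 ->
  exists d u g, D3 d /\ U3 u /\ GammaInf3 g /\ B = d *m u *m g.
Proof.
move=> [hE hdet] h10 h20 h21.
have EB := mx3E B.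
have e00 := hE o3_0 o3_0; have e01 := hE o3_0 o3_1; have e02 := hE o3_0 o3_2.
have e11 := hE o3_1 o3_1; have e12 := hE o3_1 o3_2; have e22 := hE o3_2 o3_2.
move: EB hdet e00 e01 e02 e11 e12 e22.
rewrite h10 h20 h21.
set b00 := B o3_0 o3_0; set b01 := B o3_0 o3_1; set b02 := B o3_0 o3_2.
set b11 := B o3_1 o3_1; set b12 := B o3_1 o3_2; set b22 := B o3_2 o3_2.
move=> EB hdet e00 e01 e02 e11 e12 e22.
have hd : b00 * b11 * b22 - 1 = 0.
  by rewrite -hdet EB det_mx3; ring.
set x := b01 * (b11 * b22); set w := b12 * (b00 * b22); set z := b02 * (b11 * b22).
have : Eis x by rewrite /x; eis.
move/S3_rep => [al [sal [t1 [ht1 cal]]]].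
have : Eis w by rewrite /w; eis.
move/S3_rep => [ga [sga [t2 [ht2 cga]]]].
have Eal := S3_Eis sal; have Ega := S3_Eis sga.
set p := x - al; set q := w - ga.
have : Eis (z - al * q) by rewrite /z /q /w; eis.
move/S3_rep => [be [sbe [t3 [ht3 cbe]]]].
have Ebe := S3_Eis sbe.
set r := z - al * q - be.
exists (mx3 b00 0 0 0 b11 0 0 0 b22), (mx3 1 al be 0 1 ga 0 0 1), (mx3 1 p r 0 1 q 0 0 1).
split.
  split; first by apply: forall3; rewrite !mxE.
  split; first by apply: forall3_1; rewrite !mxE.
  by rewrite !mxE /=; apply/eqP; rewrite -subr_eq0; apply/eqP.
split.
  split; first by apply: forall3_1; rewrite !mxE.
  split; first by apply: forall3; rewrite !mxE.
  by rewrite !mxE /=.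
split.
  split.
    split.
      split; first by apply: mx3_Eis; rewrite /p /q /r /x /w /z; eis.
      by rewrite det_mx3; ring.
    apply: forall3; rewrite one3E !mxE /=; try (exists 0; split; [eis | by rewrite subrr mulr0]).
    - by exists t1; split; rewrite // subr0.
    - by exists t3; split; rewrite // subr0.
    - by exists t2; split; rewrite // subr0.
  split; first by apply: forall3; rewrite !mxE.
  by apply: forall3_1; rewrite !mxE.
rewrite EB !mx3_mul.
congr mx3; try ring.
- by apply: (rel_eq (- b01) _ hd); rewrite /p /x; ring.
- by apply: (rel_eq (- b02) _ hd); rewrite /r /z; ring.
- by apply: (rel_eq (- b12) _ hd); rewrite /q /w; ring.
Qed.

Lemma mul3E (A B : 'M[algC]_3) i j :
  (A *m B) i j = A i o3_0 * B o3_0 j + A i o3_1 * B o3_1 j + A i o3_2 * B o3_2 j.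
Proof.
rewrite mxE !big_ord_recl big_ord0 addr0 addrA.
have -> : (lift ord0 (lift ord0 ord0) : 'I_3) = o3_2 by apply/val_inj.
have -> : (lift ord0 ord0 : 'I_3) = o3_1 by apply/val_inj.
by have -> : (ord0 : 'I_3) = o3_0 by apply/val_inj.
Qed.

Lemma mul2E (A B : 'M[algC]_2) i j :
  (A *m B) i j = A i o2_0 * B o2_0 j + A i o2_1 * B o2_1 j.
Proof.
rewrite mxE !big_ord_recl big_ord0 addr0.
have -> : (lift ord0 ord0 : 'I_2) = o2_1 by apply/val_inj.
by have -> : (ord0 : 'I_2) = o2_0 by apply/val_inj.
Qed.

Lemma phi2M x z : phi2 x *m phi2 z = phi2 (x *m z).
Proof. by rewrite !phi2E mx3_mul !mul2E; congr mx3; ring. Qed.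
Lemma phi1M x z : phi1 x *m phi1 z = phi1 (x *m z).
Proof. by rewrite !phi1E mx3_mul !mul2E; congr mx3; ring. Qed.
Lemma phi2_1 : phi2 1%:M = 1%:M.
Proof. by rewrite phi2E one2E one3E !mxE. Qed.
Lemma phi1_1 : phi1 1%:M = 1%:M.
Proof. by rewrite phi1E one2E one3E !mxE. Qed.

Lemma unit_det1 n (M : 'M[algC]_n.+1) : \det M = 1 -> M \in unitmx.
Proof. by move=> h; rewrite unitmxE h unitr1. Qed.

Lemma phi2V {y : 'M[algC]_2} : \det y = 1 -> phi2 (invmx y) *m phi2 y = 1%:M.
Proof. by move=> h; rewrite phi2M mulVmx ?phi2_1 // unit_det1. Qed.
Lemma phi2V' {y : 'M[algC]_2} : \det y = 1 -> phi2 y *m phi2 (invmx y) = 1%:M.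
Proof. by move=> h; rewrite phi2M mulmxV ?phi2_1 // unit_det1. Qed.
Lemma phi1V {y : 'M[algC]_2} : \det y = 1 -> phi1 (invmx y) *m phi1 y = 1%:M.
Proof. by move=> h; rewrite phi1M mulVmx ?phi1_1 // unit_det1. Qed.
Lemma phi1V' {y : 'M[algC]_2} : \det y = 1 -> phi1 y *m phi1 (invmx y) = 1%:M.
Proof. by move=> h; rewrite phi1M mulmxV ?phi1_1 // unit_det1. Qed.

Lemma SL_mul (A B : 'M[algC]_3) : SL_o A -> SL_o B -> SL_o (A *m B).
Proof.
move=> [hA dA] [hB dB]; split; last by rewrite det_mulmx dA dB mulr1.
by move=> i j; rewrite mul3E; eis.
Qed.

Lemma SL_phi2 (y : 'M[algC]_2) : SL_o y -> SL_o (phi2 y).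
Proof.
move=> hy; have [h1 h2 h3 h4 h5] := SL2_facts hy.
split; first by rewrite phi2E; apply: mx3_Eis; eis.
by rewrite phi2E det_mx3 -[RHS]h5; ring.
Qed.
Lemma SL_phi1 (y : 'M[algC]_2) : SL_o y -> SL_o (phi1 y).
Proof.
move=> hy; have [h1 h2 h3 h4 h5] := SL2_facts hy.
split; first by rewrite phi1E; apply: mx3_Eis; eis.
by rewrite phi1E det_mx3 -[RHS]h5; ring.
Qed.
Lemma SL_inv (y : 'M[algC]_2) : SL_o y -> SL_o (invmx y).
Proof.
move=> hy; have [h1 h2 h3 h4 h5] := SL2_facts hy.
have hd : \det y = 1 by case: hy.
split; last by rewrite det_inv hd invr1.
rewrite inv2E // => i j; rewrite mxE.
by case: i => [[|[|?]] Hi]; case: j => [[|[|?]] Hj] //=; eis.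
Qed.
Lemma SL_D3 (d : 'M[algC]_3) : D3 d -> SL_o d.
Proof.
move=> hd; have [_ [he hp]] := hd.
split; first by rewrite (D3E hd); apply: mx3_Eis; eis.
by rewrite (D3E hd) det_mx3 -[RHS]hp; ring.
Qed.
Lemma SL_U3 (u : 'M[algC]_3) : U3 u -> SL_o u.
Proof.
move=> hu; have [_ [_ [s1 [s2 s3]]]] := hu.
split; first by rewrite (U3E hu); apply: mx3_Eis; eis; apply: S3_Eis.
by rewrite (U3E hu) det_mx3; ring.
Qed.
Lemma SL_G (g : 'M[algC]_3) : GammaInf3 g -> SL_o g.
Proof. by case=> [[]]. Qed.

Notation ya y := (y o2_0 o2_0).
Notation yb y := (y o2_0 o2_1).
Notation yc y := (y o2_1 o2_0).
Notation yd y := (y o2_1 o2_1).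

Lemma phi2A0 (y : 'M[algC]_2) (A : 'M[algC]_3) j : (phi2 y *m A) o3_0 j = A o3_0 j.
Proof. by rewrite mul3E phi2E !mxE /=; ring. Qed.
Lemma phi2A1 (y : 'M[algC]_2) (A : 'M[algC]_3) j : (phi2 y *m A) o3_1 j = ya y * A o3_1 j + yb y * A o3_2 j.
Proof. by rewrite mul3E phi2E !mxE /=; ring. Qed.
Lemma phi2A2 (y : 'M[algC]_2) (A : 'M[algC]_3) j : (phi2 y *m A) o3_2 j = yc y * A o3_1 j + yd y * A o3_2 j.
Proof. by rewrite mul3E phi2E !mxE /=; ring. Qed.
Lemma phi1A0 (y : 'M[algC]_2) (A : 'M[algC]_3) j : (phi1 y *m A) o3_0 j = ya y * A o3_0 j + yb y * A o3_1 j.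
Proof. by rewrite mul3E phi1E !mxE /=; ring. Qed.
Lemma phi1A1 (y : 'M[algC]_2) (A : 'M[algC]_3) j : (phi1 y *m A) o3_1 j = yc y * A o3_0 j + yd y * A o3_1 j.
Proof. by rewrite mul3E phi1E !mxE /=; ring. Qed.
Lemma phi1A2 (y : 'M[algC]_2) (A : 'M[algC]_3) j : (phi1 y *m A) o3_2 j = A o3_2 j.
Proof. by rewrite mul3E phi1E !mxE /=; ring. Qed.

Lemma unit_neq0 {l} : Eis_unit l -> l <> 0.
Proof. by move=> [_ [m [_ h]]] l0; move: h; rewrite l0 mul0r => /eqP; rewrite eq_sym oner_eq0. Qed.

Lemma det3E (A : 'M[algC]_3) : \det A =
  A o3_0 o3_0 * (A o3_1 o3_1 * A o3_2 o3_2 - A o3_1 o3_2 * A o3_2 o3_1)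
  - A o3_0 o3_1 * (A o3_1 o3_0 * A o3_2 o3_2 - A o3_1 o3_2 * A o3_2 o3_0)
  + A o3_0 o3_2 * (A o3_1 o3_0 * A o3_2 o3_1 - A o3_1 o3_1 * A o3_2 o3_0).
Proof. by rewrite {1}(mx3E A) det_mx3. Qed.

Section Main.
Variables (Rc : algC -> Prop) (Ra : algC -> algC -> Prop).
Hypothesis hRc : reps_units Rc.
Hypothesis hRa : forall c, Eis c -> c <> 0 -> reps_mod c (Ra c).

Lemma Ydet y : Yset Rc Ra y -> \det y = 1.
Proof. by move=> hy; case: (Y_SL hy). Qed.

Lemma D2_ex A : Delta2 A -> exists y d u, cidx_valid Rc Ra (Ix2 y d u) /\
                   in_coset (cidx_lead (Ix2 y d u)) A.
Proof.
move=> [hSL [h10 h20]].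
have [hE hdet] := hSL.
have hd : A o3_0 o3_0 * (A o3_1 o3_1 * A o3_2 o3_2 - A o3_1 o3_2 * A o3_2 o3_1) = 1.
  by rewrite -hdet det3E h10 h20; ring.
have hst : (A o3_1 o3_2 * A o3_0 o3_0) * (- A o3_2 o3_1) + (A o3_2 o3_2 * A o3_0 o3_0) * A o3_1 o3_1 = 1.
  by rewrite -hd; ring.
have [y [l [hy [hl [ec ed]]]]] := Y_ex2 hRc hRa hst (EisN (hE _ _)) (hE _ _) (EisM (hE _ _) (hE _ _)) (EisM (hE _ _) (hE _ _)).
set B := phi2 y *m A.
have hB : SL_o B by apply: SL_mul => //; apply: SL_phi2; apply: Y_SL hy.
have [d [u [g [hd3 [hu3 [hg3 eB]]]]]] : exists d u g, D3 d /\ U3 u /\ GammaInf3 g /\ B = d *m u *m g.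
  by apply: borel => //; rewrite /B ?phi2A1 ?phi2A2 ?h10 ?h20 ?ec ?ed; ring.
exists y, d, u; split; first by [].
exists g; split => //.
have -> : phi2 (invmx y) *m d *m u *m g = phi2 (invmx y) *m (d *m u *m g) by rewrite !mulmxA.
by rewrite -eB /B mulmxA phi2V ?mul1mx // Ydet.
Qed.

Lemma back10 {y1 : 'M[algC]_2} {A' A : 'M[algC]_3} : Yset Rc Ra y1 -> A' = phi2 y1 *m A ->
  A' o3_1 o3_0 = 0 -> A' o3_2 o3_0 = 0 -> A o3_1 o3_0 = 0 /\ A o3_2 o3_0 = 0.
Proof.
move=> hy eA h1 h2.
have [_ _ _ _ hdet] := Y_facts hy.
move: h1 h2; rewrite eA phi2A1 phi2A2 => h1 h2.
split.
  by rewrite -[LHS]mul1r -hdet; apply: (eq_from (P := yd y1 * (ya y1 * A o3_1 o3_0 + yb y1 * A o3_2 o3_0) - yb y1 * (yc y1 * A o3_1 o3_0 + yd y1 * A o3_2 o3_0)) (Q := 0)); [ring | rewrite h1 h2; ring].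
by rewrite -[LHS]mul1r -hdet; apply: (eq_from (P := ya y1 * (yc y1 * A o3_1 o3_0 + yd y1 * A o3_2 o3_0) - yc y1 * (ya y1 * A o3_1 o3_0 + yb y1 * A o3_2 o3_0)) (Q := 0)); [ring | rewrite h1 h2; ring].
Qed.

Lemma D10_ex A : Delta10 A -> exists y1 y2 d u, cidx_valid Rc Ra (Ix10 y1 y2 d u) /\
                       in_coset (cidx_lead (Ix10 y1 y2 d u)) A.
Proof.
move=> [hSL [hne hmin]].
have [hE hdet] := hSL.
set r1 := A o3_2 o3_0 * A o3_0 o3_1 - A o3_0 o3_0 * A o3_2 o3_1.
set r2 := A o3_0 o3_0 * A o3_1 o3_1 - A o3_1 o3_0 * A o3_0 o3_1.
have hst : A o3_1 o3_2 * r1 + A o3_2 o3_2 * r2 = 1.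
  rewrite -hdet det3E; apply: (rel_eq (- A o3_0 o3_2) _ hmin); rewrite /r1 /r2; ring.
have Er1 : Eis r1 by rewrite /r1; eis.
have Er2 : Eis r2 by rewrite /r2; eis.
have [y1 [l1 [hy1 [hl1 [ec1 ed1]]]]] := Y_ex2 hRc hRa hst Er1 Er2 (hE _ _) (hE _ _).
set A' := phi2 y1 *m A.
have hA' : SL_o A' by apply: SL_mul => //; apply: SL_phi2; apply: Y_SL hy1.
have a20 : A' o3_2 o3_0 = 0.
  rewrite /A' phi2A2 ec1 ed1; apply: (rel_eq (- l1 * A o3_0 o3_0) _ hmin); rewrite /r1 /r2; ring.
have a21 : A' o3_2 o3_1 = 0.
  rewrite /A' phi2A2 ec1 ed1; apply: (rel_eq (- (l1 * A o3_0 o3_1)) _ hmin); rewrite /r1 /r2; ring.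
have hdet' : A' o3_2 o3_2 * (A o3_0 o3_0 * A' o3_1 o3_1 - A o3_0 o3_1 * A' o3_1 o3_0) = 1.
  have := hA'.2; rewrite det3E a20 a21 /A' !phi2A0 => <-; ring.
have hst2 : (A' o3_2 o3_2 * A o3_0 o3_1) * (- A' o3_1 o3_0) + (A' o3_2 o3_2 * A' o3_1 o3_1) * A o3_0 o3_0 = 1.
  by rewrite -hdet'; ring.
have [hE' _] := hA'.
have [y2 [l2 [hy2 [hl2 [ec2 ed2]]]]] := Y_ex2 hRc hRa hst2 (EisN (hE' _ _)) (hE _ _) (EisM (hE' _ _) (hE _ _)) (EisM (hE' _ _) (hE' _ _)).
have y2n1 : y2 <> 1%:M.
  move=> e; move: ec2; rewrite e one2E mxE /= => /esym /eqP; rewrite mulf_eq0 oppr_eq0 => /orP [/eqP l0|/eqP a10].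
    exact: (unit_neq0 hl2 l0).
  have [b1 b2] := back10 hy1 (erefl A') a10 a20.
  by case: hne.
set B := phi1 y2 *m A'.
have hB : SL_o B by apply: SL_mul => //; apply: SL_phi1; apply: Y_SL hy2.
have [d [u [g [hd3 [hu3 [hg3 eB]]]]]] : exists d u g, D3 d /\ U3 u /\ GammaInf3 g /\ B = d *m u *m g.
  apply: borel => //; rewrite /B ?phi1A1 ?phi1A2 ?a20 ?a21 // ec2 ed2 /A' phi2A0; ring.
exists y1, y2, d, u; split; first by [].
exists g; split => //.
have -> : phi2 (invmx y1) *m phi1 (invmx y2) *m d *m u *m g = phi2 (invmx y1) *m (phi1 (invmx y2) *m (d *m u *m g)) by rewrite !mulmxA.
by rewrite -eB /B (mulmxA (phi1 (invmx y2))) phi1V ?mul1mx ?Ydet // /A' mulmxA phi2V ?mul1mx // Ydet.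
Qed.

Lemma D11_ex A : Delta11 A -> exists y1 y2 y3 d u, cidx_valid Rc Ra (Ix11 y1 y2 y3 d u) /\
                          in_coset (cidx_lead (Ix11 y1 y2 y3 d u)) A.
Proof.
move=> [hSL hmin].
have [hE hdet] := hSL.
have hne : A o3_1 o3_0 <> 0 \/ A o3_2 o3_0 <> 0.
  have [h1|h1] := eqVneq (A o3_1 o3_0) 0; last by left; apply/eqP.
  have [h2|h2] := eqVneq (A o3_2 o3_0) 0; last by right; apply/eqP.
  by exfalso; apply: hmin; rewrite h1 h2; ring.
have [g [x' [y' [s [t [[hg hx' hy' hs ht] [e10 [e20 est]]]]]]]] := bezout _ _ (hE _ _) (hE _ _) hne.
have hst1 : (- t) * (- y') + s * x' = 1 by rewrite -est; ring.
have [y1 [l1 [hy1 [hl1 [ec1 ed1]]]]] := Y_ex2 hRc hRa hst1 (EisN hy') hx' (EisN ht) hs.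
set A' := phi2 y1 *m A.
have hA' : SL_o A' by apply: SL_mul => //; apply: SL_phi2; apply: Y_SL hy1.
have [hE' hdetA'] := hA'.
have a20 : A' o3_2 o3_0 = 0 by rewrite /A' phi2A2 ec1 ed1 e10 e20; ring.
have a21 : A' o3_2 o3_1 <> 0.
  move=> h0; apply: hmin.
  have : g * A' o3_2 o3_1 = l1 * (A o3_1 o3_0 * A o3_2 o3_1 - A o3_1 o3_1 * A o3_2 o3_0).
    by rewrite /A' phi2A2 ec1 ed1 e10 e20; ring.
  rewrite h0 mulr0 => /esym /eqP; rewrite mulf_eq0 => /orP [/eqP l0|/eqP //].
  by exfalso; exact: (unit_neq0 hl1 l0).
have hst2 : (A o3_0 o3_1 * A' o3_2 o3_2 - A' o3_2 o3_1 * A o3_0 o3_2) * (- A' o3_1 o3_0)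
     + (A' o3_1 o3_1 * A' o3_2 o3_2 - A' o3_1 o3_2 * A' o3_2 o3_1) * A o3_0 o3_0 = 1.
  by rewrite -hdetA' det3E a20 /A' !phi2A0; ring.
have [y2 [l2 [hy2 [hl2 [ec2 ed2]]]]] := Y_ex2 hRc hRa hst2 (EisN (hE' _ _)) (hE _ _)
   (EisB (EisM (hE _ _) (hE' _ _)) (EisM (hE' _ _) (hE _ _))) (EisB (EisM (hE' _ _) (hE' _ _)) (EisM (hE' _ _) (hE' _ _))).
have y2n1 : y2 <> 1%:M.
  move=> e; move: ec2; rewrite e one2E mxE /= => /esym /eqP; rewrite mulf_eq0 oppr_eq0 => /orP [/eqP l0|/eqP a10].
    exact: (unit_neq0 hl2 l0).
  have [b1 b2] := back10 hy1 (erefl A') a10 a20.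
  by case: hne.
set A'' := phi1 y2 *m A'.
have hA'' : SL_o A'' by apply: SL_mul => //; apply: SL_phi1; apply: Y_SL hy2.
have [hE'' hdetA''] := hA''.
have b10 : A'' o3_1 o3_0 = 0 by rewrite /A'' phi1A1 ec2 ed2 /A' phi2A0; ring.
have b20 : A'' o3_2 o3_0 = 0 by rewrite /A'' phi1A2.
have b21 : A'' o3_2 o3_1 <> 0 by rewrite /A'' phi1A2.
have hst3 : (A'' o3_0 o3_0 * A'' o3_1 o3_2) * (- A'' o3_2 o3_1) + (A'' o3_0 o3_0 * A'' o3_2 o3_2) * A'' o3_1 o3_1 = 1.
  by rewrite -hdetA'' det3E b10 b20; ring.
have [y3 [l3 [hy3 [hl3 [ec3 ed3]]]]] := Y_ex2 hRc hRa hst3 (EisN (hE'' _ _)) (hE'' _ _)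
   (EisM (hE'' _ _) (hE'' _ _)) (EisM (hE'' _ _) (hE'' _ _)).
have y3n1 : y3 <> 1%:M.
  move=> e; move: ec3; rewrite e one2E mxE /= => /esym /eqP; rewrite mulf_eq0 oppr_eq0 => /orP [/eqP l0|/eqP a0].
    exact: (unit_neq0 hl3 l0).
  exact: b21 a0.
set B := phi2 y3 *m A''.
have hB : SL_o B by apply: SL_mul => //; apply: SL_phi2; apply: Y_SL hy3.
have [d [u [gm [hd3 [hu3 [hg3 eB]]]]]] : exists d u g, D3 d /\ U3 u /\ GammaInf3 g /\ B = d *m u *m g.
  by apply: borel => //; rewrite /B ?phi2A1 ?phi2A2 ?b10 ?b20 ?ec3 ?ed3; ring.
exists y1, y2, y3, d, u; split; first by [].
exists gm; split => //.
have -> : phi2 (invmx y1) *m phi1 (invmx y2) *m phi2 (invmx y3) *m d *m u *m gm =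
  phi2 (invmx y1) *m (phi1 (invmx y2) *m (phi2 (invmx y3) *m (d *m u *m gm))) by rewrite !mulmxA.
rewrite -eB /B (mulmxA (phi2 (invmx y3))) phi2V ?mul1mx ?Ydet //.
by rewrite /A'' (mulmxA (phi1 (invmx y2))) phi1V ?mul1mx ?Ydet // /A' mulmxA phi2V ?mul1mx // Ydet.
Qed.
End Main.
Arguments Ydet {Rc Ra y}.

Lemma p2_00 (y : 'M[algC]_2) : phi2 y o3_0 o3_0 = 1. Proof. by rewrite phi2E mxE. Qed.
Lemma p2_01 (y : 'M[algC]_2) : phi2 y o3_0 o3_1 = 0. Proof. by rewrite phi2E mxE. Qed.
Lemma p2_02 (y : 'M[algC]_2) : phi2 y o3_0 o3_2 = 0. Proof. by rewrite phi2E mxE. Qed.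
Lemma p2_10 (y : 'M[algC]_2) : phi2 y o3_1 o3_0 = 0. Proof. by rewrite phi2E mxE. Qed.
Lemma p2_11 (y : 'M[algC]_2) : phi2 y o3_1 o3_1 = ya y. Proof. by rewrite phi2E mxE. Qed.
Lemma p2_12 (y : 'M[algC]_2) : phi2 y o3_1 o3_2 = yb y. Proof. by rewrite phi2E mxE. Qed.
Lemma p2_20 (y : 'M[algC]_2) : phi2 y o3_2 o3_0 = 0. Proof. by rewrite phi2E mxE. Qed.
Lemma p2_21 (y : 'M[algC]_2) : phi2 y o3_2 o3_1 = yc y. Proof. by rewrite phi2E mxE. Qed.
Lemma p2_22 (y : 'M[algC]_2) : phi2 y o3_2 o3_2 = yd y. Proof. by rewrite phi2E mxE. Qed.
Definition phi2e := (p2_00, p2_01, p2_02, p2_10, p2_11, p2_12, p2_20, p2_21, p2_22).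

Lemma solve_l {m n x x' : algC} : m != 0 -> m * x' = n * x -> x' = (n / m) * x.
Proof. by move=> hm h; apply: (mulfI hm); rewrite h; field. Qed.

Lemma ut_col0 (G B : 'M[algC]_3) i : B o3_1 o3_0 = 0 -> B o3_2 o3_0 = 0 ->
  (G *m B) i o3_0 = G i o3_0 * B o3_0 o3_0.
Proof. by move=> h1 h2; rewrite mul3E h1 h2; ring. Qed.

Lemma ut_row2 (B X : 'M[algC]_3) j : B o3_2 o3_0 = 0 -> B o3_2 o3_1 = 0 ->
  (B *m X) o3_2 j = B o3_2 o3_2 * X o3_2 j.
Proof. by move=> h1 h2; rewrite mul3E h1 h2; ring. Qed.

Lemma ut_minor (G B : 'M[algC]_3) : B o3_1 o3_0 = 0 -> B o3_2 o3_0 = 0 -> B o3_2 o3_1 = 0 ->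
  (G *m B) o3_1 o3_0 * (G *m B) o3_2 o3_1 - (G *m B) o3_1 o3_1 * (G *m B) o3_2 o3_0 =
  B o3_0 o3_0 * B o3_1 o3_1 * (G o3_1 o3_0 * G o3_2 o3_1 - G o3_1 o3_1 * G o3_2 o3_0).
Proof. by move=> h1 h2 h3; rewrite !mul3E h1 h2 h3; ring. Qed.

Lemma core {G H G' H' B B' A : 'M[algC]_3} : H *m G = 1%:M -> H' *m G' = 1%:M ->
  A = G *m B -> A = G' *m B' -> \det A = 1 ->
  B o3_1 o3_0 = 0 -> B o3_2 o3_0 = 0 -> B o3_2 o3_1 = 0 ->
  B' o3_1 o3_0 = 0 -> B' o3_2 o3_0 = 0 -> B' o3_2 o3_1 = 0 ->
  (forall i, G' i o3_0 * B' o3_0 o3_0 = G i o3_0 * B o3_0 o3_0) /\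
  (forall j, B' o3_2 o3_2 * H o3_2 j = B o3_2 o3_2 * H' o3_2 j).
Proof.
move=> hHG hHG' eA eA' hd h1 h2 h3 h1' h2' h3'.
split; first by move=> i; rewrite -!ut_col0 // -eA -eA'.
have hu : A \in unitmx by rewrite unitmxE hd unitr1.
have eH : H = B *m invmx A by rewrite -(mulmxK hu H) {1}eA mulmxA hHG mul1mx.
have eH' : H' = B' *m invmx A by rewrite -(mulmxK hu H') {1}eA' mulmxA hHG' mul1mx.
move=> j; rewrite eH eH' !ut_row2 //; ring.
Qed.

Definition G10 (y1 y2 : 'M[algC]_2) := phi2 (invmx y1) *m phi1 (invmx y2).
Definition H10 (y1 y2 : 'M[algC]_2) := phi1 y2 *m phi2 y1.

Lemma G10_col0 {y1 y2} : \det y1 = 1 -> \det y2 = 1 ->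
  [/\ G10 y1 y2 o3_0 o3_0 = yd y2, G10 y1 y2 o3_1 o3_0 = - (yc y2 * yd y1) & G10 y1 y2 o3_2 o3_0 = yc y2 * yc y1].
Proof. by move=> h1 h2; rewrite /G10 !inv2E // phi2E phi1E mx3_mul !mxE /=; split; ring. Qed.

Lemma G10_minor {y1 y2} : \det y1 = 1 -> \det y2 = 1 ->
  G10 y1 y2 o3_1 o3_0 * G10 y1 y2 o3_2 o3_1 - G10 y1 y2 o3_1 o3_1 * G10 y1 y2 o3_2 o3_0 = 0.
Proof. by move=> h1 h2; rewrite /G10 !inv2E // phi2E phi1E mx3_mul !mxE /=; ring. Qed.

Lemma G11_col0 y1 y2 y3 i : (G10 y1 y2 *m phi2 (invmx y3)) i o3_0 = G10 y1 y2 i o3_0.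
Proof. by rewrite mul3E phi2E !mxE /=; ring. Qed.

Lemma G11_minor {y1 y2 y3} : \det y1 = 1 -> \det y2 = 1 -> \det y3 = 1 ->
  let G := G10 y1 y2 *m phi2 (invmx y3) in
  G o3_1 o3_0 * G o3_2 o3_1 - G o3_1 o3_1 * G o3_2 o3_0 = yc y2 * yc y3.
Proof.
move=> h1 h2 h3 /=; rewrite /G10 !inv2E // !phi2E phi1E !mx3_mul !mxE /=.
move: h1; rewrite det2E => h1.
have h1' : ya y1 * yd y1 - yb y1 * yc y1 - 1 = 0 by rewrite h1 subrr.
by apply: (rel_eq (yc y2 * yc y3) _ h1'); ring.
Qed.

Lemma H10G10 {y1 y2} : \det y1 = 1 -> \det y2 = 1 -> H10 y1 y2 *m G10 y1 y2 = 1%:M.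
Proof.
move=> h1 h2; rewrite /H10 /G10 mulmxA -(mulmxA (phi1 y2)) phi2V' // mulmx1 phi1V' //.
Qed.

Lemma H11G11 {y1 y2 y3} : \det y1 = 1 -> \det y2 = 1 -> \det y3 = 1 ->
  (phi2 y3 *m H10 y1 y2) *m (G10 y1 y2 *m phi2 (invmx y3)) = 1%:M.
Proof.
move=> h1 h2 h3; rewrite mulmxA -(mulmxA (phi2 y3)) H10G10 // mulmx1 phi2V' //.
Qed.

Lemma cancelG {G H B B' : 'M[algC]_3} : H *m G = 1%:M -> G *m B = G *m B' -> B = B'.
Proof. by move=> hHG e; rewrite -[B]mul1mx -hHG -mulmxA e mulmxA hHG mul1mx. Qed.

Lemma Bfacts {d u g} : D3 d -> U3 u -> GammaInf3 g ->
  let B := d *m u *m g in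
  [/\ B o3_1 o3_0 = 0, B o3_2 o3_0 = 0, B o3_2 o3_1 = 0, SL_o B &
   [/\ B o3_0 o3_0 != 0, B o3_1 o3_1 != 0 & B o3_2 o3_2 != 0]].
Proof.
move=> hd hu hg B.
have [_ [_ hp]] := hd.
have hSL : SL_o B by apply: SL_mul; [apply: SL_mul; [apply: SL_D3 | apply: SL_U3] | apply: SL_G].
split; [by rewrite /B (dug hd hu hg) !mxE | by rewrite /B (dug hd hu hg) !mxE | by rewrite /B (dug hd hu hg) !mxE | by [] |].
rewrite /B (dug hd hu hg) !mxE /=.
split; apply/eqP => h0; move: hp; rewrite h0 ?mulr0 ?mul0r ?mulr0 ?mul0r => /eqP; rewrite eq_sym oner_eq0 //.
Qed.

Lemma det_trick {a b c d X Y : algC} : a * d - b * c = 1 -> X * d = Y * d -> X * c = Y * c -> X = Y.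
Proof.
move=> h e1 e2.
have h' : a * d - b * c - 1 = 0 by rewrite h subrr.
have -> : X = a * (X * d) - b * (X * c) by apply: (rel_eq (- X) _ h'); ring.
rewrite e1 e2; apply/esym; apply: (rel_eq (- Y) _ h'); ring.
Qed.

Lemma eq_from2 {X Y P Q R : algC} k : X - Y = P - Q + k * R -> P = Q -> R = 0 -> X = Y.
Proof. by move=> h e r; apply/eqP; rewrite -subr_eq0 h e r subrr mulr0 addr0. Qed.

Section Main2.
Variables (Rc : algC -> Prop) (Ra : algC -> algC -> Prop).
Hypothesis hRc : reps_units Rc.
Hypothesis hRa : forall c, Eis c -> c <> 0 -> reps_mod c (Ra c).

Lemma SLinvY y : Yset Rc Ra y -> SL_o (invmx y).
Proof. by move=> hy; apply: SL_inv; apply: Y_SL hy. Qed.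

Lemma in_D2 {y d u A} : cidx_valid Rc Ra (Ix2 y d u) -> in_coset (cidx_lead (Ix2 y d u)) A -> Delta2 A.
Proof.
move=> [hy [hd hu]] [g [hg ->]].
have [b10 b20 b21 hB _] := Bfacts hd hu hg.
rewrite (_ : cidx_lead _ *m g = phi2 (invmx y) *m (d *m u *m g)); last by rewrite /= !mulmxA.
split; first by apply: SL_mul => //; apply: SL_phi2; apply: SLinvY.
by rewrite !(ut_col0 _ _ _ b10 b20) phi2E !mxE /= !mul0r.
Qed.

Lemma in_D10 {y1 y2 d u A} : cidx_valid Rc Ra (Ix10 y1 y2 d u) -> in_coset (cidx_lead (Ix10 y1 y2 d u)) A -> Delta10 A.
Proof.
move=> [hy1 [hy2 [hn2 [hd hu]]]] [g [hg ->]].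
have [b10 b20 b21 hB [n0 n1 n2]] := Bfacts hd hu hg.
rewrite (_ : cidx_lead _ *m g = G10 y1 y2 *m (d *m u *m g)); last by rewrite /= /G10 !mulmxA.
have dy1 := Ydet hy1; have dy2 := Ydet hy2.
split; first by apply: SL_mul => //; apply: SL_mul; apply: SL_phi2 || apply: SL_phi1; apply: SLinvY.
split; last by rewrite ut_minor // G10_minor // mulr0.
have c2 := Y_cn0 hRc hy2 hn2.
have [_ e1 e2] := G10_col0 dy1 dy2.
rewrite !(ut_col0 _ _ _ b10 b20) e1 e2.
have hc2 : yc y2 != 0 by apply/eqP.
have [h|h] := eqVneq (yc y1) 0.
  have hd1 : yd y1 != 0.
    by apply/eqP => d0; move: dy1; rewrite det2E h d0 !mulr0 subrr => /eqP; rewrite eq_sym oner_eq0.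
  by left; apply/eqP; rewrite mulf_neq0 // oppr_eq0 mulf_neq0.
by right; apply/eqP; rewrite !mulf_neq0.
Qed.

Lemma in_D11 {y1 y2 y3 d u A} : cidx_valid Rc Ra (Ix11 y1 y2 y3 d u) -> in_coset (cidx_lead (Ix11 y1 y2 y3 d u)) A -> Delta11 A.
Proof.
move=> [hy1 [hy2 [hy3 [hn2 [hn3 [hd hu]]]]]] [g [hg ->]].
have [b10 b20 b21 hB [n0 n1 n2]] := Bfacts hd hu hg.
rewrite (_ : cidx_lead _ *m g = (G10 y1 y2 *m phi2 (invmx y3)) *m (d *m u *m g)); last by rewrite /= /G10 !mulmxA.
have dy1 := Ydet hy1; have dy2 := Ydet hy2; have dy3 := Ydet hy3.
split; first by apply: SL_mul => //; apply: SL_mul; [apply: SL_mul|]; apply: SL_phi2 || apply: SL_phi1; apply: SLinvY.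
rewrite ut_minor // G11_minor //.
have c2 := Y_cn0 hRc hy2 hn2; have c3 := Y_cn0 hRc hy3 hn3.
by apply/eqP; rewrite !mulf_neq0 //; apply/eqP.
Qed.

Lemma uniq2 y d u y' d' u' A : cidx_valid Rc Ra (Ix2 y d u) -> cidx_valid Rc Ra (Ix2 y' d' u') ->
  in_coset (cidx_lead (Ix2 y d u)) A -> in_coset (cidx_lead (Ix2 y' d' u')) A -> Ix2 y d u = Ix2 y' d' u'.
Proof.
move=> hv hv' hc hc'.
have [[_ hdA] _] := in_D2 hv hc.
move: hv hv' hc hc' => [hy [hd hu]] [hy' [hd' hu']] [g [hg eA]] [g' [hg' eA']].
have [b10 b20 b21 hB [n0 n1 n2]] := Bfacts hd hu hg.
have [b10' b20' b21' hB' [n0' n1' n2']] := Bfacts hd' hu' hg'.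
have eA1 : A = phi2 (invmx y) *m (d *m u *m g) by rewrite eA /= !mulmxA.
have eA1' : A = phi2 (invmx y') *m (d' *m u' *m g') by rewrite eA' /= !mulmxA.
have [_ hrow] := core (phi2V' (Ydet hy)) (phi2V' (Ydet hy')) eA1 eA1' hdA b10 b20 b21 b10' b20' b21'.
have r1 := hrow o3_1; have r2 := hrow o3_2.
rewrite !phi2e in r1 r2.
have [ey _] := Y_uniq hRc hRa hy hy' (solve_l n2 (esym r1)) (solve_l n2 (esym r2)).
subst y'.
have eB := cancelG (phi2V' (Ydet hy)) (etrans (esym eA1) eA1').
by have [-> ->] := du_uniq hd hu hg hd' hu' hg' eB.
Qed.

Lemma col0_y2 {y1 y2 y2' b b'} : Yset Rc Ra y1 -> Yset Rc Ra y2 -> Yset Rc Ra y2' -> b' != 0 ->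
  (forall i, G10 y1 y2' i o3_0 * b' = G10 y1 y2 i o3_0 * b) -> y2 = y2'.
Proof.
move=> hy1 hy2 hy2' nb hcol.
have [f0 f1 f2] := G10_col0 (Ydet hy1) (Ydet hy2).
have [f0' f1' f2'] := G10_col0 (Ydet hy1) (Ydet hy2').
have h0 := hcol o3_0; have h1 := hcol o3_1; have h2 := hcol o3_2.
rewrite f0 f0' in h0; rewrite f1 f1' in h1; rewrite f2 f2' in h2.
have [_ _ _ _ dt] := Y_facts hy1.
have ec : b' * yc y2' = b * yc y2.
  by apply: (det_trick dt); [apply: (eq_from _ (esym h1)) | apply: (eq_from _ h2)]; ring.
have ed : b' * yd y2' = b * yd y2 by rewrite mulrC h0 mulrC.
by have [] := Y_uniq hRc hRa hy2 hy2' (solve_l nb ec) (solve_l nb ed).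
Qed.

Lemma uniq10 y1 y2 d u y1' y2' d' u' A : cidx_valid Rc Ra (Ix10 y1 y2 d u) -> cidx_valid Rc Ra (Ix10 y1' y2' d' u') ->
  in_coset (cidx_lead (Ix10 y1 y2 d u)) A -> in_coset (cidx_lead (Ix10 y1' y2' d' u')) A ->
  Ix10 y1 y2 d u = Ix10 y1' y2' d' u'.
Proof.
move=> hv hv' hc hc'.
have [[_ hdA] _] := in_D10 hv hc.
move: hv hv' hc hc' => [hy1 [hy2 [hn2 [hd hu]]]] [hy1' [hy2' [hn2' [hd' hu']]]] [g [hg eA]] [g' [hg' eA']].
have [b10 b20 b21 hB [n0 n1 n2]] := Bfacts hd hu hg.
have [b10' b20' b21' hB' [n0' n1' n2']] := Bfacts hd' hu' hg'.
have eA1 : A = G10 y1 y2 *m (d *m u *m g) by rewrite eA /= /G10 !mulmxA.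
have eA1' : A = G10 y1' y2' *m (d' *m u' *m g') by rewrite eA' /= /G10 !mulmxA.
have [hcol hrow] := core (H10G10 (Ydet hy1) (Ydet hy2)) (H10G10 (Ydet hy1') (Ydet hy2')) eA1 eA1' hdA b10 b20 b21 b10' b20' b21'.
have r1 := hrow o3_1; have r2 := hrow o3_2.
rewrite /H10 !phi1A2 !phi2e in r1 r2.
have [ey1 _] := Y_uniq hRc hRa hy1 hy1' (solve_l n2 (esym r1)) (solve_l n2 (esym r2)).
subst y1'.
have ey2 := col0_y2 hy1 hy2 hy2' n0' hcol.
subst y2'.
have eB := cancelG (H10G10 (Ydet hy1) (Ydet hy2)) (etrans (esym eA1) eA1').
by have [-> ->] := du_uniq hd hu hg hd' hu' hg' eB.
Qed.

Lemma uniq11 y1 y2 y3 d u y1' y2' y3' d' u' A : cidx_valid Rc Ra (Ix11 y1 y2 y3 d u) ->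
  cidx_valid Rc Ra (Ix11 y1' y2' y3' d' u') ->
  in_coset (cidx_lead (Ix11 y1 y2 y3 d u)) A -> in_coset (cidx_lead (Ix11 y1' y2' y3' d' u')) A ->
  Ix11 y1 y2 y3 d u = Ix11 y1' y2' y3' d' u'.
Proof.
move=> hv hv' hc hc'.
have [[_ hdA] _] := in_D11 hv hc.
move: hv hv' hc hc' => [hy1 [hy2 [hy3 [hn2 [hn3 [hd hu]]]]]] [hy1' [hy2' [hy3' [hn2' [hn3' [hd' hu']]]]]] [g [hg eA]] [g' [hg' eA']].
have [b10 b20 b21 hB [n0 n1 n2]] := Bfacts hd hu hg.
have [b10' b20' b21' hB' [n0' n1' n2']] := Bfacts hd' hu' hg'.
have eA1 : A = (G10 y1 y2 *m phi2 (invmx y3)) *m (d *m u *m g) by rewrite eA /= /G10 !mulmxA.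
have eA1' : A = (G10 y1' y2' *m phi2 (invmx y3')) *m (d' *m u' *m g') by rewrite eA' /= /G10 !mulmxA.
have [hcol hrow] := core (H11G11 (Ydet hy1) (Ydet hy2) (Ydet hy3)) (H11G11 (Ydet hy1') (Ydet hy2') (Ydet hy3')) eA1 eA1' hdA b10 b20 b21 b10' b20' b21'.
have hcol' : forall i, G10 y1' y2' i o3_0 * (d' *m u' *m g') o3_0 o3_0 = G10 y1 y2 i o3_0 * (d *m u *m g) o3_0 o3_0.
  by move=> i; have := hcol i; rewrite !G11_col0.
have c2 : yc y2 != 0 by apply/eqP; apply: (Y_cn0 hRc hy2 hn2).
have c2' : yc y2' != 0 by apply/eqP; apply: (Y_cn0 hRc hy2' hn2').
have ey1 : y1 = y1'.
  have [_ f1 f2] := G10_col0 (Ydet hy1) (Ydet hy2).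
  have [_ f1' f2'] := G10_col0 (Ydet hy1') (Ydet hy2').
  have h1 := hcol' o3_1; have h2 := hcol' o3_2.
  rewrite f1 f1' in h1; rewrite f2 f2' in h2.
  have nm : (d' *m u' *m g') o3_0 o3_0 * yc y2' != 0 by rewrite mulf_neq0.
  have ec : ((d' *m u' *m g') o3_0 o3_0 * yc y2') * yc y1' = ((d *m u *m g) o3_0 o3_0 * yc y2) * yc y1.
    by apply: (eq_from _ h2); ring.
  have ed : ((d' *m u' *m g') o3_0 o3_0 * yc y2') * yd y1' = ((d *m u *m g) o3_0 o3_0 * yc y2) * yd y1.
    by apply: (eq_from _ (esym h1)); ring.
  by have [] := Y_uniq hRc hRa hy1 hy1' (solve_l nm ec) (solve_l nm ed).
subst y1'.
have ey2 := col0_y2 hy1 hy2 hy2' n0' hcol'.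
subst y2'.
have r0 := hrow o3_0; have r1 := hrow o3_1; have r2 := hrow o3_2.
rewrite !phi2A2 /H10 !phi1A1 !phi1A2 !phi2e in r0 r1 r2.
have ec3 : (d *m u *m g) o3_2 o3_2 * yc y3' = (d' *m u' *m g') o3_2 o3_2 * yc y3.
  apply: (mulIf c2); apply: (eq_from _ (esym r0)); ring.
have ec3' : (d *m u *m g) o3_2 o3_2 * yc y3' - (d' *m u' *m g') o3_2 o3_2 * yc y3 = 0 by rewrite ec3 subrr.
have [_ _ _ _ dt] := Y_facts hy1.
have ed3 : (d *m u *m g) o3_2 o3_2 * yd y3' = (d' *m u' *m g') o3_2 o3_2 * yd y3.
  apply: (det_trick dt).
    by apply: (eq_from2 (- (yd y2 * yb y1)) _ (esym r2) ec3'); ring.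
  by apply: (eq_from2 (- (yd y2 * ya y1)) _ (esym r1) ec3'); ring.
have [ey3 _] := Y_uniq hRc hRa hy3 hy3' (solve_l n2 ec3) (solve_l n2 ed3).
subst y3'.
have eB := cancelG (H11G11 (Ydet hy1) (Ydet hy2) (Ydet hy3)) (etrans (esym eA1) eA1').
by have [-> ->] := du_uniq hd hu hg hd' hu' hg' eB.
Qed.
End Main2.

Lemma d2_10 {A} : Delta2 A -> Delta10 A -> False.
Proof. by move=> [_ [h1 h2]] [_ [[h|h] _]]; apply: h. Qed.
Lemma d2_11 {A} : Delta2 A -> Delta11 A -> False.
Proof. by move=> [_ [h1 h2]] [_ []]; rewrite h1 h2; ring. Qed.
Lemma d10_11 {A} : Delta10 A -> Delta11 A -> False.
Proof. by move=> [_ [_ h]] [_ []]. Qed.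

Theorem corollary2p17 (Rc : algC -> Prop) (Ra : algC -> algC -> Prop)
  (hRc : reps_units Rc)
  (hRa : forall c, Eis c -> c <> 0 -> reps_mod c (Ra c)) :
  (* SL_3(o) is the disjoint union of Delta_2, Delta_{1,0}, Delta_{1,1} *)
  (forall A : 'M[algC]_3, SL_o A <-> Delta2 A \/ Delta10 A \/ Delta11 A) /\
  (forall A : 'M[algC]_3, ~ (Delta2 A /\ Delta10 A)) /\
  (forall A : 'M[algC]_3, ~ (Delta2 A /\ Delta11 A)) /\
  (forall A : 'M[algC]_3, ~ (Delta10 A /\ Delta11 A)) /\
  (* Delta_2 as union of cosets *)
  (forall A : 'M[algC]_3, Delta2 A <->
     exists y d u, cidx_valid Rc Ra (Ix2 y d u) /\
                   in_coset (cidx_lead (Ix2 y d u)) A) /\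
  (* Delta_{1,0} as union of cosets *)
  (forall A : 'M[algC]_3, Delta10 A <->
     exists y1 y2 d u, cidx_valid Rc Ra (Ix10 y1 y2 d u) /\
                       in_coset (cidx_lead (Ix10 y1 y2 d u)) A) /\
  (* Delta_{1,1} as union of cosets *)
  (forall A : 'M[algC]_3, Delta11 A <->
     exists y1 y2 y3 d u, cidx_valid Rc Ra (Ix11 y1 y2 y3 d u) /\
                          in_coset (cidx_lead (Ix11 y1 y2 y3 d u)) A) /\
  (* all the cosets on the right-hand sides are pairwise disjoint *)
  (forall k l : cidx, cidx_valid Rc Ra k -> cidx_valid Rc Ra l -> k <> l ->
     forall A : 'M[algC]_3,
       ~ (in_coset (cidx_lead k) A /\ in_coset (cidx_lead l) A)).
Proof.
split.
  move=> A; split; last by case=> [[]|[[]|[]]].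
  move=> hA.
  have [m0|mn] := eqVneq (A o3_1 o3_0 * A o3_2 o3_1 - A o3_1 o3_1 * A o3_2 o3_0) 0; last first.
    by right; right; split => //; apply/eqP.
  have [h1|h1] := eqVneq (A o3_1 o3_0) 0.
    have [h2|h2] := eqVneq (A o3_2 o3_0) 0; first by left.
    by right; left; split => //; split => //; right; apply/eqP.
  by right; left; split => //; split => //; left; apply/eqP.
split; first by move=> A [h1 h2]; apply: d2_10 h1 h2.
split; first by move=> A [h1 h2]; apply: d2_11 h1 h2.
split; first by move=> A [h1 h2]; apply: d10_11 h1 h2.
split.
  move=> A; split; first exact: D2_ex.
  by move=> [y [d [u [hv hc]]]]; apply: (in_D2 _ _ hv hc).
split.
  move=> A; split; first exact: D10_ex.
  by move=> [y1 [y2 [d [u [hv hc]]]]]; apply: (in_D10 _ _ hRc hv hc).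
split.
  move=> A; split; first exact: D11_ex.
  by move=> [y1 [y2 [y3 [d [u [hv hc]]]]]]; apply: (in_D11 _ _ hRc hv hc).
move=> k l hk hl hne A [ck cl].
case: k hk ck hne => [y d u|y1 y2 d u|y1 y2 y3 d u] hk ck hne;
case: l hl cl hne => [y' d' u'|y1' y2' d' u'|y1' y2' y3' d' u'] hl cl hne.
- by apply: hne; apply: (uniq2 _ _ hRc hRa _ _ _ _ _ _ _ hk hl ck cl).
- by apply: (d2_10 (in_D2 _ _ hk ck) (in_D10 _ _ hRc hl cl)).
- by apply: (d2_11 (in_D2 _ _ hk ck) (in_D11 _ _ hRc hl cl)).
- by apply: (d2_10 (in_D2 _ _ hl cl) (in_D10 _ _ hRc hk ck)).
- by apply: hne; apply: (uniq10 _ _ hRc hRa _ _ _ _ _ _ _ _ _ hk hl ck cl).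
- by apply: (d10_11 (in_D10 _ _ hRc hk ck) (in_D11 _ _ hRc hl cl)).
- by apply: (d2_11 (in_D2 _ _ hl cl) (in_D11 _ _ hRc hk ck)).
- by apply: (d10_11 (in_D10 _ _ hRc hl cl) (in_D11 _ _ hRc hk ck)).
- by apply: hne; apply: (uniq11 _ _ hRc hRa _ _ _ _ _ _ _ _ _ _ _ hk hl ck cl).
Qed.
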